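(* For $\sigma^2>0$ let $\Phi(\cdot;\sigma^2)$ denote the cumulative distribution function of $\mathcal{N}(0,\sigma^2)$. For every $\mu\ne0$ and $\nu^2,\sigma^2>0$, neither $\frac{\Phi(\mu;\sigma^2)}{\Phi(0;\nu^2)}$ nor $\frac{\Phi(0;\nu^2)}{\Phi(\mu;\sigma^2)}$ lies in the interval \[ \Big[1-\tfrac{1}{\sqrt{2\pi e}}\min\{1,|\mu|/\sigma\},\ 1+\tfrac{1}{\sqrt{2\pi e}}\min\{1,|\mu|/\sigma\}\Big]. \] *)

(* Defs.v *)
From HB Require Import structures.
From mathcomp Require Import all_boot all_order all_algebra.
From mathcomp Require Import all_classical all_reals all_analysis.
Set Implicit Arguments. Unset Strict Implicit. Unset Printing Implicit Defensive.
Import Order.TTheory GRing.Theory Num.Theory.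
Local Open Scope classical_set_scope.
Local Open Scope ring_scope.

Definition Phi {R : realType} (x s2 : R) : R :=
  fine (normal_prob 0 (Num.sqrt s2) `]-oo, x]).

(* Main.v *)
Require Import Defs.
From HB Require Import structures.
From mathcomp Require Import all_boot all_order all_algebra.
From mathcomp Require Import all_classical all_reals all_analysis.
From mathcomp Require Import ring lra measurable_realfun.
Import Order.TTheory GRing.Theory Num.Theory.
Import numFieldTopology.Exports.
Local Open Scope ring_scope.

Section helpers.
Context {R : realType}.
Local Open Scope classical_set_scope.
Local Open Scope ring_scope.

Lemma pdf_sym (s x : R) : s != 0 -> normal_pdf 0 s (- x) = normal_pdf 0 s x.
Proof. by move=> s0; rewrite /normal_pdf (negbTE s0) /normal_fun !subr0 sqrrN. Qed.

Lemma pdf_lb (s x : R) : 0 < s -> x ^+ 2 <= s ^+ 2 ->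
  normal_peak s * expR (- 2^-1) <= normal_pdf 0 s x.
Proof.
move=> s0 xs; rewrite /normal_pdf (negbTE (lt0r_neq0 s0)) /normal_fun subr0.
rewrite ler_pM2l ?normal_peak_gt0 ?lt0r_neq0 // ler_expR mulNr lerN2.
rewrite ler_pdivrMr; last by rewrite pmulrn_lgt0 // exprn_gt0.
rewrite -mulr_natr; have : 0 < s ^+ 2 by rewrite exprn_gt0.
move: (s ^+ 2) xs => y; lra.
Qed.

Lemma half_prob (s : R) : s != 0 -> normal_prob 0 s `]-oo, 0] = (2^-1)%:E.
Proof.
move=> s0.
have := ge0_symfun_integralT (@normal_pdf_ge0 R 0 s) (@continuous_normal_pdf R 0 s s0).
rewrite integral_normal_pdf.
move=> /(_ (fun x => esym (@pdf_sym s x s0))).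
rewrite -set_itvcy => H.
rewrite /normal_prob -{1}oppr0 ge0_integration_by_substitutionNy; last 2 first.
- have cf := @continuous_normal_pdf R 0 s s0. exact: continuous_subspaceT.
- by move=> x _; exact: normal_pdf_ge0.
under eq_integral do rewrite /= pdf_sym //.
move: H; set X := (\int[_]_(_ in _) _)%E.
case: X => [r| |] //=.
- by move=> -[] H; congr EFin; lra.
- by rewrite mulry gtr0_sg ?ltr0n // mul1e.
- by rewrite mulrNy gtr0_sg ?ltr0n // mul1e.
Qed.

Lemma prob_itv_lb (s a b : R) : 0 < s -> a < b -> - s <= a -> b <= s ->
  (((b - a) * (normal_peak s * expR (- 2^-1)))%:E <= normal_prob 0 s `]a, b])%E.
Proof.
move=> s0 ab sa bs; rewrite /normal_prob.
apply: (@le_trans _ _ (\int[lebesgue_measure]_(x in `]a, b]) (normal_peak s * expR (- 2^-1))%:E)%E).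
  rewrite integral_cst //= lebesgue_measure_itv /=.
  by rewrite lte_fin ab -EFinD -EFinM lee_fin mulrC.
apply: ge0_le_integral => //=.
- move=> x _; rewrite lee_fin mulr_ge0 ?normal_peak_ge0 ?expR_ge0 //.
- apply/measurable_EFinP; apply: measurable_funTS; exact: measurable_normal_pdf.
- move=> x; rewrite /= in_itv /= => /andP[ax xb]; rewrite lee_fin pdf_lb //.
  nra.
Qed.

Lemma peak_expE (s : R) : 0 < s ->
  normal_peak s * expR (- 2^-1) = (Num.sqrt (2 * pi * expR 1))^-1 / s.
Proof.
move=> s0.
have e2 : expR (1 : R) = expR (2^-1 : R) ^+ 2 by rewrite -expRM_natr mulVf.
have p0 : 0 < pi := pi_gt0 R.
have q0 : 0 < Num.sqrt (2 * pi) :> R. rewrite sqrtr_gt0; lra.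
have h0 : 0 < expR (2^-1 : R) := expR_gt0 _.
rewrite /normal_peak e2 -mulrnAr sqrtrM ?sqr_ge0 // sqrtr_sqr gtr0_norm //.
rewrite sqrtrM; last lra.
rewrite sqrtr_sqr gtr0_norm // expRN -mulr_natr (mulrC pi).
field; rewrite ?lt0r_neq0 //.
Qed.

Lemma split_itv (s a b : R) : a <= b ->
  normal_prob 0 s `]-oo, b] = (normal_prob 0 s `]-oo, a] + normal_prob 0 s `]a, b])%E.
Proof.
move=> ab; rewrite -measureU //=.
  congr (normal_prob 0 s _); apply: itv_bndbnd_setU; rewrite bnd_simp //.
apply/seteqP; split => x //= []; rewrite /= !in_itv /= => xa /andP[ax _].
by move: xa; rewrite leNgt ax.
Qed.

Lemma fin_prob (s : R) (A : set R) : measurable A -> normal_prob 0 s A \is a fin_num.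
Proof.
move=> mA; rewrite ge0_fin_numE ?measure_ge0 //.
by rewrite (le_lt_trans (probability_le1 (normal_prob 0 s) mA)) // ltry.
Qed.
End helpers.

Lemma final_alg {R : realType} (q x : R) : 0 < x < 2^-1 -> 0 <= q ->
  (2^-1 + x <= q \/ q + x <= 2^-1) ->
  q / 2^-1 \notin `[1 - x, 1 + x] /\ 2^-1 / q \notin `[1 - x, 1 + x].
Proof.
move=> /andP[x0 x1] q0 [] H; rewrite !in_itv /= !negb_and -!ltNge invrK.
- have qp : 0 < q by lra.
  split; apply/orP; [right|left]; first by lra.
  rewrite ltr_pdivrMr //; nra.
- split; first by apply/orP; left; lra.
  have [->|qp] := eqVneq q 0; first by rewrite invr0 mulr0; apply/orP; left; lra.
  have qp' : 0 < q by rewrite lt0r qp.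
  apply/orP; right; rewrite ltr_pdivlMr //; nra.
Qed.


Theorem lemmaB2 (R : realType) (mu nu2 sigma2 : R) :
  mu != 0 -> 0 < nu2 -> 0 < sigma2 ->
  let c := (Num.sqrt (2 * pi * expR 1))^-1 * Num.min 1 (`|mu| / Num.sqrt sigma2) in
  Phi mu sigma2 / Phi 0 nu2 \notin `[1 - c, 1 + c] /\
  Phi 0 nu2 / Phi mu sigma2 \notin `[1 - c, 1 + c].
Proof.
move=> mu0 nu0 sig0 c.
have s0 : 0 < Num.sqrt sigma2 by rewrite sqrtr_gt0.
have H0 : Phi 0 nu2 = 2^-1.
  by rewrite /Phi half_prob // gt_eqF // sqrtr_gt0.
rewrite H0 /c; clear c H0.
rewrite /Phi; set s := Num.sqrt sigma2 in s0 *.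
set C := (Num.sqrt (2 * pi * expR 1))^-1.
set m := Num.min 1 (`|mu| / s).
have m0 : 0 < m by rewrite /m lt_min ltr01 divr_gt0 // normr_gt0.
have m1 : m <= 1 by rewrite /m ge_min lexx.
have ms : m * s <= `|mu| by rewrite -ler_pdivlMr // /m ge_min lexx orbT.
have e2 : 2 <= expR (1:R) by have := expR_ge1Dx (1:R); lra.
have pi2 := pi_ge2 R.
have X4 : 4 < 2 * pi * expR (1:R) by nra.
have q0 := sqrtr_ge0 (2 * pi * expR (1:R)).
have q2 : 2 < Num.sqrt (2 * pi * expR (1:R)).
  have hs : Num.sqrt (2 * pi * expR (1:R)) ^+ 2 = 2 * pi * expR 1.
    by rewrite sqr_sqrtr //; lra.
  nra.
have C0 : 0 < C by rewrite invr_gt0; lra.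
have CX : C * Num.sqrt (2 * pi * expR 1) = 1 by rewrite mulVf // gt_eqF //; lra.
have x0 : 0 < C * m by nra.
have x1 : C * m < 2^-1 by nra.
have K : (m * s) * (normal_peak s * expR (- 2^-1)) = C * m.
  by rewrite peak_expE // /C; field; apply/andP; split; rewrite gt_eqF //; lra.
have sn0 : s != 0 by rewrite gt_eqF.
have ms0 : 0 < m * s by rewrite mulr_gt0.
apply: final_alg; first by rewrite x0 x1.
  by rewrite fine_ge0 // measure_ge0.
case: (ltgtP mu 0) => [mneg | mpos | mz]; last by rewrite mz eqxx in mu0.
- right; rewrite -lee_fin EFinD fineK ?fin_prob // -(@half_prob R s sn0).
  rewrite (@split_itv R s mu 0 (ltW mneg)) leeD2l //.
  apply: (@le_trans _ _ (normal_prob 0 s `]- (m * s), 0])).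
    have := @prob_itv_lb R s (- (m * s)) 0 s0.
    have h1 : - (m * s) < 0 by lra.
    have h2 : - s <= - (m * s) by nra.
    have h3 : 0 <= s by lra.
    by move=> /(_ h1 h2 h3); rewrite sub0r opprK K.
  rewrite le_measure ?inE //= => x; rewrite /= !in_itv /= => /andP[h1 h2].
  rewrite h2 andbT; move: ms; rewrite ltr0_norm // => ms; lra.
- left; rewrite -lee_fin EFinD fineK ?fin_prob // -(@half_prob R s sn0).
  rewrite (@split_itv R s 0 mu (ltW mpos)) leeD2l //.
  apply: (@le_trans _ _ (normal_prob 0 s `]0, m * s])).
    have := @prob_itv_lb R s 0 (m * s) s0.
    have h2 : - s <= 0 by lra.
    have h3 : m * s <= s by nra.
    by move=> /(_ ms0 h2 h3); rewrite subr0 K.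
  rewrite le_measure ?inE //= => x; rewrite /= !in_itv /= => /andP[h1 h2].
  rewrite h1 /=; move: ms; rewrite gtr0_norm // => ms; lra.
Qed.
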